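(* Let $n,m\in\mathbb N$, $d:=\min\{n,m\}$, and $k\in\{1,\dots,d\}$. (i) For nonzero positive semidefinite $\rho\in\mathbb M_n\otimes\mathbb M_m$: $\rho\in\mathsf K_k\iff\mathrm{FSN}(\rho)\le k$. Consequently $\min\{\ell\in\{1,\dots,d\}:\rho\in\mathsf K_\ell\}=\lceil\mathrm{FSN}(\rho)\rceil$. (ii) For a Hermitian-preserving map $\Phi:\mathbb M_n\to\mathbb M_m$ with $\Phi\in\mathsf P_1$: $\Phi\in\mathsf P_k\iff\tau(\Phi)\ge k$.
   Context: For $\psi=\sum_{i,j}a_{ij}e_i\otimes f_j\in\mathbb C^n\otimes\mathbb C^m$, its Schmidt coefficients $s_1(\psi)\ge\dots\ge s_d(\psi)\ge0$ are the singular values of $[a_{ij}]$. For $\alpha\in[1,d]$ with $k'=\lfloor\alpha\rfloor$, $\theta=\alpha-k'$, $r=\lceil\alpha\rceil$, a unit vector $\psi$ is $\alpha$-admissible if $s_j(\psi)=0$ for $j\ge r+1$ and, when $\theta>0$, $s_{k'+1}(\psi)\le\frac\theta{k'}\sum_{j=1}^{k'}s_j(\psi)$; $\mathcal V_\alpha$ is the set of these. $\mathsf K_\alpha$ is the closure of the convex cone generated by $\{\psi\psi^\ast:\psi\in\mathcal V_\alpha\}$. The Choi matrix is $C_\Phi=\sum_{i,j}E_{ij}\otimes\Phi(E_{ij})$, and a Hermitian-preserving $\Phi$ is in $\mathsf P_\alpha$ if $\langle\psi,C_\Phi\psi\rangle\ge0$ for all $\psi\in\mathcal V_\alpha$. $\mathrm{FSN}(\rho):=\inf\{\alpha\in[1,d]:\rho\in\mathsf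 K_\alpha\}$ for nonzero positive semidefinite $\rho$, and $\tau(\Phi):=\sup\{\alpha\in[1,d]:\Phi\in\mathsf P_\alpha\}$ for Hermitian-preserving $\Phi\in\mathsf P_1$. *)

(* Defs.v *)
From HB Require Import structures.
From mathcomp Require Import all_boot all_order all_algebra.
From mathcomp Require Import boolp classical_sets reals.
From mathcomp Require Import complex mxtens.
Set Implicit Arguments. Unset Strict Implicit. Unset Printing Implicit Defensive.
Import Order.TTheory GRing.Theory Num.Theory ComplexField.
Local Open Scope classical_set_scope.
Local Open Scope ring_scope.

Section Defs.
Variable R : realType.
Local Notation C := (R[i]).

Definition adjmx p q (A : 'M[C]_(p, q)) : 'M[C]_(q, p) := map_mx Num.conj A^T.

Definition unitarymx p (U : 'M[C]_p) : Prop := U *m adjmx U = 1%:M.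

Definition hermitian p (A : 'M[C]_p) : Prop := adjmx A = A.

Definition psd p (A : 'M[C]_p) : Prop :=
  hermitian A /\ forall v : 'cV[C]_p, 0 <= (adjmx v *m A *m v) 0 0.

Definition rdiag n m (s : nat -> R) : 'M[C]_(n, m) :=
  \matrix_(i, j) (if (i == j :> nat) then ((s i)%:C)%C else 0).

(* s (0-indexed: s 0 >= s 1 >= ... >= s (d-1) >= 0, s j = 0 for j >= d)
   is the sequence of singular values of A, d = min n m, i.e.
   A = U diag(s) V^* for unitaries U, V. *)
Definition singular_values n m (A : 'M[C]_(n, m)) (s : nat -> R) : Prop :=
  (forall j, (j.+1 < minn n m)%N -> s j.+1 <= s j) /\
  (forall j, (j < minn n m)%N -> 0 <= s j) /\
  (forall j, (minn n m <= j)%N -> s j = 0) /\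
  exists (U : 'M[C]_n) (V : 'M[C]_m),
    unitarymx U /\ unitarymx V /\ A = U *m rdiag n m s *m adjmx V.

Definition psi_vec n m (A : 'M[C]_(n, m)) : 'cV[C]_(n * m) :=
  \sum_(i < n) \sum_(j < m) A i j *: (delta_mx i (0 : 'I_1) *t delta_mx j (0 : 'I_1)).

Definition unit_vec n m (A : 'M[C]_(n, m)) : Prop :=
  \sum_(i < n) \sum_(j < m) `|A i j| ^+ 2 = 1.

(* alpha-admissible unit vectors (Schmidt coefficients are 0-indexed here:
   paper's s_j is s (j-1)) *)
Definition admissible n m (alpha : R) (A : 'M[C]_(n, m)) : Prop :=
  unit_vec A /\
  exists s : nat -> R, singular_values A s /\
    (forall j : nat, Num.ceil alpha <= j%:Z -> s j = 0) /\
    (let k' := Num.truncn alpha in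
     let theta := alpha - k'%:R in
     0 < theta -> s k' <= theta / k'%:R * \sum_(j < k') s j).

Definition proj n m (A : 'M[C]_(n, m)) : 'M[C]_(n * m) :=
  psi_vec A *m adjmx (psi_vec A).

Definition cone_V n m (alpha : R) (rho : 'M[C]_(n * m)) : Prop :=
  exists (N : nat) (c : 'I_N -> R) (A : 'I_N -> 'M[C]_(n, m)),
    (forall l, 0 <= c l /\ admissible alpha (A l)) /\
    rho = \sum_(l < N) ((c l)%:C)%C *: proj (A l).

Definition Kset n m (alpha : R) (rho : 'M[C]_(n * m)) : Prop :=
  forall e : R, 0 < e -> exists sigma, @cone_V n m alpha sigma /\
    forall p q, `|rho p q - sigma p q| < (e%:C)%C.

Definition choi n m (Phi : 'M[C]_n -> 'M[C]_m) : 'M[C]_(n * m) :=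
  \sum_(i < n) \sum_(j < n) (delta_mx i j *t Phi (delta_mx i j)).

Definition herm_preserving n m (Phi : 'M[C]_n -> 'M[C]_m) : Prop :=
  forall X, hermitian X -> hermitian (Phi X).

Definition Pset n m (alpha : R) (Phi : 'M[C]_n -> 'M[C]_m) : Prop :=
  forall A : 'M[C]_(n, m), admissible alpha A ->
    0 <= (adjmx (psi_vec A) *m choi Phi *m psi_vec A) 0 0.

Definition FSN n m (rho : 'M[C]_(n * m)) : R :=
  inf [set a : R | 1 <= a <= (minn n m)%:R /\ @Kset n m a rho].

Definition tau n m (Phi : 'M[C]_n -> 'M[C]_m) : R :=
  sup [set a : R | 1 <= a <= (minn n m)%:R /\ Pset a Phi].

End Defs.

Arguments cone_V {R} n m alpha rho.
Arguments Kset {R} n m alpha rho.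
Arguments FSN {R} n m rho.
Arguments tau {R n m} Phi.

(* Main.v *)
Require Import Defs.
From HB Require Import structures.
From mathcomp Require Import all_boot all_order all_algebra.
From mathcomp Require Import boolp classical_sets reals.
From mathcomp Require Import complex mxtens.
From mathcomp Require Import spectral.
From mathcomp Require Import ring lra.
Import Order.TTheory GRing.Theory Num.Theory ComplexField.
Local Open Scope ring_scope.
Set Implicit Arguments. Unset Strict Implicit. Unset Printing Implicit Defensive.

Section W1.
Variable R : realType.
Local Notation C := (R[i]).

Lemma adjmxE p q (A : 'M[C]_(p, q)) i j : adjmx A i j = (A j i)^*.
Proof. by rewrite /adjmx !mxE. Qed.

Lemma adjmxK p q (A : 'M[C]_(p, q)) : adjmx (adjmx A) = A.
Proof. by apply/matrixP => i j; rewrite /adjmx !mxE conjCK. Qed.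

Lemma adjmxM p q r (A : 'M[C]_(p, q)) (B : 'M[C]_(q, r)) :
  adjmx (A *m B) = adjmx B *m adjmx A.
Proof.
by rewrite /adjmx trmx_mul map_mxM.
Qed.

Lemma adjmxD p q (A B : 'M[C]_(p, q)) : adjmx (A + B) = adjmx A + adjmx B.
Proof. by apply/matrixP => i j; rewrite /adjmx !mxE rmorphD. Qed.

Lemma adjmxN p q (A : 'M[C]_(p, q)) : adjmx (- A) = - adjmx A.
Proof. by apply/matrixP => i j; rewrite /adjmx !mxE rmorphN. Qed.

Lemma adjmxB p q (A B : 'M[C]_(p, q)) : adjmx (A - B) = adjmx A - adjmx B.
Proof. by rewrite adjmxD adjmxN. Qed.

Lemma adjmxZ p q a (A : 'M[C]_(p, q)) : adjmx (a *: A) = a^* *: adjmx A.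
Proof. by apply/matrixP => i j; rewrite /adjmx !mxE rmorphM. Qed.

Lemma adjmx_sum p q I (r : seq I) (P : pred I) (F : I -> 'M[C]_(p, q)) :
  adjmx (\sum_(i <- r | P i) F i) = \sum_(i <- r | P i) adjmx (F i).
Proof.
apply/matrixP => a b; rewrite /adjmx !mxE !summxE rmorph_sum.
by apply: eq_bigr => i _; rewrite !mxE.
Qed.

Lemma adjmx1 p : adjmx (1%:M : 'M[C]_p) = 1%:M.
Proof. by apply/matrixP => i j; rewrite /adjmx !mxE eq_sym rmorph_nat. Qed.

Lemma unitary_spec p (U : 'M[C]_p) : Defs.unitarymx U <-> U \is unitarymx.
Proof. by split => [H|/unitarymxP H]; [apply/unitarymxP|]. Qed.

Lemma unitaryC p (U : 'M[C]_p) : Defs.unitarymx U -> adjmx U *m U = 1%:M.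
Proof. by move=> H; apply: mulmx1C. Qed.

Lemma unitary_adj p (U : 'M[C]_p) : Defs.unitarymx U -> Defs.unitarymx (adjmx U).
Proof. by move=> H; rewrite /Defs.unitarymx adjmxK unitaryC. Qed.

Lemma psi_vecE' n m (A : 'M[C]_(n, m)) k :
  psi_vec A k 0 = A (mxtens_unindex k).1 (mxtens_unindex k).2.
Proof.
have h0 : (mxtens_unindex (0 : 'I_(1 * 1))) = (0, 0).
  by case: (mxtens_unindex _) => a b; rewrite !ord1.
set u := mxtens_unindex k.
have E : forall i j, (delta_mx i (0 : 'I_1) *t delta_mx j (0 : 'I_1) : 'cV[C]_(n * m)) k 0 =
    ((u.1 == i) && (u.2 == j))%:R.
  by move=> i j; rewrite !mxE h0 /= !eqxx !andbT -natrM mulnb.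
rewrite /psi_vec summxE (eq_bigr (fun i => \sum_j A i j * ((u.1 == i) && (u.2 == j))%:R)); last first.
  by move=> i _; rewrite summxE; apply: eq_bigr => j _; rewrite mxE E.
rewrite (bigD1 u.1) //= [X in _ + X]big1 ?addr0; last first.
  move=> i hi; rewrite big1 // => j _.
  by rewrite eq_sym (negbTE hi) /= mulr0.
rewrite (bigD1 (mxtens_unindex k).2) //= [X in _ + X]big1 ?addr0; last first.
  by move=> j hj; rewrite eqxx eq_sym (negbTE hj) /= mulr0.
by rewrite !eqxx /= mulr1.
Qed.

Lemma psi_vecE n m (A : 'M[C]_(n, m)) i j :
  psi_vec A (mxtens_index (i, j)) 0 = A i j.
Proof. by rewrite psi_vecE' mxtens_indexK. Qed.

Definition rshp n m (v : 'cV[C]_(n * m)) : 'M[C]_(n, m) :=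
  \matrix_(i < n, j < m) v (@mxtens_index n m (i, j)) 0.

Lemma psi_vec_reshape n m (v : 'cV[C]_(n * m)) : psi_vec (rshp v) = v.
Proof.
apply/matrixP => k z; rewrite ord1 psi_vecE' mxE.
by rewrite -surjective_pairing mxtens_unindexK.
Qed.

Lemma psi_vecD n m (A B : 'M[C]_(n, m)) : psi_vec (A + B) = psi_vec A + psi_vec B.
Proof. by apply/matrixP => k z; rewrite ord1 !mxE !psi_vecE' mxE. Qed.

Lemma psi_vecZ n m a (A : 'M[C]_(n, m)) : psi_vec (a *: A) = a *: psi_vec A.
Proof. by apply/matrixP => k z; rewrite ord1 !mxE !psi_vecE' mxE. Qed.

Lemma psi_vecN n m (A : 'M[C]_(n, m)) : psi_vec (- A) = - psi_vec A.
Proof. by apply/matrixP => k z; rewrite ord1 !mxE !psi_vecE' mxE. Qed.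

Lemma psi_vecB n m (A B : 'M[C]_(n, m)) : psi_vec (A - B) = psi_vec A - psi_vec B.
Proof. by rewrite psi_vecD psi_vecN. Qed.

Lemma sum_tens n m (F : 'I_(n * m) -> C) :
  \sum_(k < n * m) F k = \sum_(i < n) \sum_(j < m) F (mxtens_index (i, j)).
Proof.
rewrite pair_big /=.
rewrite (reindex (fun k : 'I_(n * m) => mxtens_unindex k)) /=.
  by apply: eq_bigr => k _; rewrite mxtens_unindexK.
by exists (@mxtens_index n m) => x _; rewrite ?mxtens_indexK ?mxtens_unindexK.
Qed.

Lemma unit_vecE n m (A : 'M[C]_(n, m)) :
  unit_vec A <-> (adjmx (psi_vec A) *m psi_vec A) 0 0 = 1.
Proof.
rewrite /unit_vec mxE sum_tens.
have -> : \sum_(i < n) \sum_(j < m) adjmx (psi_vec A) 0 (mxtens_index (i, j)) *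
      psi_vec A (mxtens_index (i, j)) 0 = \sum_(i < n) \sum_(j < m) `|A i j| ^+ 2.
  by apply: eq_bigr => i _; apply: eq_bigr => j _; rewrite adjmxE psi_vecE normCKC.
by [].
Qed.

End W1.


Section W2.
Variable R : realType.
Local Notation C := (R[i]).

Lemma conjCR (x : R) : (x%:C%C : C)^* = x%:C%C.
Proof. exact: conjc_real. Qed.

Definition fro n m (A : 'M[C]_(n, m)) := \sum_(i < n) \sum_(j < m) `|A i j| ^+ 2.

Lemma psi_norm n m (A : 'M[C]_(n, m)) :
  (adjmx (psi_vec A) *m psi_vec A) 0 0 = fro A.
Proof.
rewrite mxE sum_tens; apply: eq_bigr => i _; apply: eq_bigr => j _.
by rewrite adjmxE psi_vecE normCKC.
Qed.

Lemma fro_tr n m (A : 'M[C]_(n, m)) : fro A = \tr (A *m adjmx A).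
Proof.
rewrite /fro /mxtrace; apply: eq_bigr => i _; rewrite mxE; apply: eq_bigr => j _.
by rewrite adjmxE normCK.
Qed.

Lemma rdiag_adj n m (s : nat -> R) :
  rdiag n m s *m adjmx (rdiag n m s) =
  \matrix_(i, k) (if (i == k) && (i < m)%N then ((s i) ^+ 2)%:C%C else 0).
Proof.
apply/matrixP => i k; rewrite !mxE.
case: (ltnP i m) => him.
- rewrite (bigD1 (Ordinal him)) //= big1 ?addr0; last first.
    move=> j /negbTE hj; rewrite /adjmx !mxE.
    have -> : (i == j :> nat) = false by apply: contraFF hj => /eqP h; apply/eqP/val_inj.
    by rewrite mul0r.
  rewrite /adjmx !mxE /= eqxx andbT.
  case: (i =P k) => [<-|hik]; first by rewrite eqxx conjCR -expr2 rmorphXn.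
  case: ifP => [/eqP h|_]; last by rewrite rmorph0 mulr0.
  by exfalso; apply: hik; apply: val_inj.
- rewrite andbF big1 // => j _; rewrite /adjmx !mxE.
  have -> : (i == j :> nat) = false by apply/negbTE; rewrite neq_ltn (leq_trans (ltn_ord j) him) orbT.
  by rewrite mul0r.
Qed.

Lemma fro_svd n m (U : 'M[C]_n) (V : 'M[C]_m) (s : nat -> R) :
  Defs.unitarymx U -> Defs.unitarymx V ->
  fro (U *m rdiag n m s *m adjmx V) = (\sum_(i < n | (i < m)%N) (s i) ^+ 2)%:C%C.
Proof.
move=> hU hV; rewrite fro_tr !adjmxM adjmxK.
have -> : U *m rdiag n m s *m adjmx V *m (V *m (adjmx (rdiag n m s) *m adjmx U))
   = U *m (rdiag n m s *m adjmx (rdiag n m s)) *m adjmx U.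
  by rewrite -!mulmxA (mulmxA (adjmx V)) (unitaryC hV) mul1mx !mulmxA.
rewrite mxtrace_mulC (mulmxA (adjmx U)) (unitaryC hU) mul1mx rdiag_adj /mxtrace rmorph_sum /=.
rewrite (bigID (fun i : 'I_n => (i < m)%N)) /= [X in _ + X]big1 ?addr0.
  by apply: eq_bigr => i him; rewrite mxE eqxx him.
by move=> i /negbTE him; rewrite mxE him andbF.
Qed.

End W2.

Section W3.
Variable R : realType.
Local Notation C := (R[i]).

Lemma herm_spectral p (H : 'M[C]_p) : Defs.hermitian H ->
  exists (P : 'M[C]_p) (d : 'rV[C]_p),
    Defs.unitarymx P /\ H = adjmx P *m diag_mx d *m P.
Proof.
move=> hH.
have hn : H \is normalmx by apply/normalmxP; rewrite -/(adjmx H) hH.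
have /orthomx_spectralP E := hn.
exists (spectralmx H), (spectral_diag H); split.
  by apply/unitary_spec; apply: spectral_unitarymx.
by rewrite {1}E invmx_unitary // spectral_unitarymx.
Qed.

Lemma adj_diagE p (P : 'M[C]_p) (d : 'rV[C]_p) a l :
  (adjmx P *m diag_mx d) a l = (P l a)^* * d 0 l.
Proof.
rewrite mxE (bigD1 l) //= big1 ?addr0; last first.
  by move=> j hj; rewrite !mxE (negbTE hj) mulr0n mulr0.
by rewrite /adjmx !mxE eqxx mulr1n.
Qed.

Lemma sort_ord p (f : 'I_p -> R) :
  exists h : 'I_p -> 'I_p, injective h /\ forall i j : 'I_p, (i <= j)%N -> f (h j) <= f (h i).
Proof.
pose r := fun i j : 'I_p => f j <= f i.
have rt : total r by move=> i j; rewrite /r le_total.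
have rtr : transitive r by move=> i j k; rewrite /r => h1 h2; apply: le_trans h2 h1.
pose t := sort_tuple r (ord_tuple p).
exists (tnth t); split.
  by apply/tuple_uniqP; rewrite /t /= sort_uniq enum_uniq.
move=> i j hij.
rewrite (tnth_nth i) (tnth_nth i).
have := @sorted_leq_nth _ r rtr (fun x => le_refl _) i (sort r (ord_tuple p)) (sort_sorted rt _) i j.
by rewrite !inE size_sort size_tuple !ltn_ord => /(_ isT isT hij).
Qed.

Lemma herm_spectral_sorted p (H : 'M[C]_p) : Defs.hermitian H ->
  exists (P : 'M[C]_p) (d : 'rV[C]_p),
    [/\ Defs.unitarymx P, H = adjmx P *m diag_mx d *m P &
       forall i j : 'I_p, (i <= j)%N -> complex.Re (d 0 j) <= complex.Re (d 0 i)].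
Proof.
move=> /herm_spectral [P0 [d0 [hP0 E]]].
have [h [hinj hmon]] := sort_ord (fun i => complex.Re (d0 0 i)).
exists (\matrix_(i, j) P0 (h i) j), (\row_i d0 0 (h i)); split.
- rewrite /Defs.unitarymx; apply/matrixP => i k; rewrite !mxE.
  move: hP0; rewrite /Defs.unitarymx => /matrixP/(_ (h i) (h k)); rewrite !mxE (inj_eq hinj) => <-.
  by apply: eq_bigr => j _; rewrite /adjmx !mxE.
- apply/matrixP => a b; rewrite E !mxE.
  rewrite (reindex_inj hinj) /=; apply: eq_bigr => l _.
  by rewrite !adj_diagE !mxE.
- by move=> i j hij; rewrite !mxE; apply: hmon.
Qed.

End W3.

Section W4.
Variable R : realType.
Local Notation C := (R[i]).
Local Notation "B ^!" :=
  (orthomx Num.conj (mx_of_hermitian (hermitian1mx _)) B) : matrix_set_scope.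

Lemma cast_unitary N n (e : N = n) (M : 'M[C]_(N, n)) :
  M \is unitarymx -> castmx (e, erefl n) M \is unitarymx.
Proof. by destruct e; rewrite castmx_id. Qed.

Lemma complete_unitary r n (X : 'M[C]_(r, n)) : X \is unitarymx ->
  exists U0 : 'M[C]_n, U0 \is unitarymx /\
    forall (i : 'I_n) (hi : (i < r)%N) k, U0 i k = X (Ordinal hi) k.
Proof.
move=> hX.
pose Z := schmidt (row_base (X^!)%MS).
have hZX : (Z <= X^!)%MS.
  by rewrite eqmx_schmidt_free ?row_base_free // eq_row_base.
have hXZ : (X <= Z^!)%MS by rewrite orthomx_sym.
have hM : col_mx X Z \is unitarymx.
  apply/unitarymxP; rewrite tr_col_mx map_row_mx mul_col_row.
  rewrite (unitarymxP hX) (unitarymxP (schmidt_unitarymx _ (rank_leq_col _))).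
  rewrite (orthomx1P hXZ) (orthomx1P hZX).
  by rewrite -scalar_mx_block.
have e : (r + \rank (X^!)%MS)%N = n by rewrite -{1}(mxrank_unitary hX) add_rank_ortho.
exists (castmx (e, erefl n) (col_mx X Z)); split; first exact: cast_unitary.
move=> i hi k; rewrite castmxE /= cast_ord_id.
have -> : cast_ord (esym e) i = lshift _ (Ordinal hi) by apply: val_inj.
by rewrite col_mxEu.
Qed.

End W4.

Section W5.
Variable R : realType.
Local Notation C := (R[i]).

Lemma ge0_complex (x : C) : 0 <= x -> x = (complex.Re x)%:C%C.
Proof. by case: x => a b; rewrite lecE /= => /andP[/eqP hb _]; rewrite hb. Qed.

Lemma svd_exists n m (A : 'M[C]_(n, m)) : exists s, singular_values A s.
Proof.
pose H := adjmx A *m A.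
have hH : Defs.hermitian H by rewrite /Defs.hermitian /H adjmxM adjmxK.
have [P [d [hP EH hsort]]] := herm_spectral_sorted hH.
have [B Bdef] : {B | B = A *m adjmx P} by exists (A *m adjmx P).
have hPP : adjmx P *m P = 1%:M := unitaryC hP.
have hBB : adjmx B *m B = diag_mx d.
  rewrite Bdef adjmxM adjmxK.
  have -> : P *m adjmx A *m (A *m adjmx P) = P *m H *m adjmx P by rewrite /H !mulmxA.
  by rewrite EH !mulmxA hP mul1mx -mulmxA hP mulmx1.
have dE : forall j, d 0 j = \sum_k `|B k j| ^+ 2.
  move=> j; move/matrixP: hBB => /(_ j j); rewrite !mxE eqxx mulr1n => <-.
  under eq_bigr => k _ do rewrite adjmxE -normCKC. by [].
have dO : forall i j, i != j -> \sum_k (B k i)^* * B k j = 0.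
  move=> i j hij; transitivity ((adjmx B *m B) i j).
    by rewrite mxE; apply: eq_bigr => k _; rewrite adjmxE.
  by rewrite hBB mxE (negbTE hij) mulr0n.
have dge0 : forall j, 0 <= d 0 j.
  by move=> j; rewrite dE sumr_ge0 // => k _; apply: exprn_ge0; apply: normr_ge0.
pose mu := fun j : 'I_m => complex.Re (d 0 j).
have dmu : forall j, d 0 j = (mu j)%:C%C by move=> j; apply: ge0_complex (dge0 j).
have mu_ge0 : forall j, 0 <= mu j by move=> j; have := dge0 j; rewrite dmu ler0c.
pose mu' := fun j : nat => nth 0 [seq mu i | i <- enum 'I_m] j.
have mu'E : forall i : 'I_m, mu' i = mu i.
  by move=> i; rewrite /mu' (nth_map i) ?size_enum_ord // nth_ord_enum.
have mu'0 : forall j, (m <= j)%N -> mu' j = 0.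
  by move=> j hj; rewrite /mu' nth_default // size_map size_enum_ord.
have mu'ge0 : forall j, 0 <= mu' j.
  move=> j; case: (ltnP j m) => hj; last by rewrite mu'0.
  by have := mu'E (Ordinal hj); rewrite /= => ->.
have mu'anti : forall i j, (i <= j)%N -> mu' j <= mu' i.
  move=> i j hij; case: (ltnP j m) => hj; last by rewrite mu'0.
  have hi : (i < m)%N := leq_ltn_trans hij hj.
  have := mu'E (Ordinal hj); have := mu'E (Ordinal hi); rewrite /= => -> ->.
  exact: (hsort (Ordinal hi) (Ordinal hj) hij).
have exr : exists j, mu' j == 0 by exists m; rewrite mu'0.
pose r := ex_minn exr.
have [hr0 hrmin] : mu' r = 0 /\ forall j, mu' j = 0 -> (r <= j)%N.
  rewrite /r; case: ex_minnP => k /eqP hk hmin; split => // j hj; apply: hmin.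
  by rewrite hj.
have hrm : (r <= m)%N by apply: hrmin; rewrite mu'0.
have mupos : forall j, (j < r)%N -> 0 < mu' j.
  move=> j hj; rewrite lt_def mu'ge0 andbT; apply/eqP => h.
  by have := hrmin _ h; rewrite leqNgt hj.
have muzero : forall j, (r <= j)%N -> mu' j = 0.
  move=> j hj; apply/eqP; rewrite eq_le mu'ge0 andbT -hr0; exact: mu'anti.
pose s := fun j => Num.sqrt (mu' j).
have sC : forall j, ((s j)%:C%C : C) ^+ 2 = (mu' j)%:C%C.
  by move=> j; rewrite -rmorphXn /= sqr_sqrtr.
have sC0 : forall j, (j < r)%N -> ((s j)%:C%C : C) != 0.
  move=> j hj; rewrite fmorph_eq0 /s; apply/eqP => h.
  by have := mupos j hj; rewrite -sqrtr_gt0 h ltxx.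
pose X : 'M[C]_(r, n) := \matrix_(i < r, k < n) (B k (widen_ord hrm i) / (s i)%:C%C).
have hX : X \is unitarymx.
  apply/unitarymxP/matrixP => i j; rewrite !mxE.
  transitivity ((\sum_k (B k (widen_ord hrm j))^* * B k (widen_ord hrm i)) /
                ((s i)%:C%C * (s j)%:C%C)).
    rewrite mulr_suml; apply: eq_bigr => k _; rewrite /adjmx !mxE rmorphM fmorphV /= conjCR.
    by rewrite invfM; ring.
  case: (i =P j) => [<-|hij].
    rewrite (eq_bigr (fun k => `|B k (widen_ord hrm i)| ^+ 2)); last by move=> k _; rewrite normCKC.
    rewrite -dE dmu -expr2 sC.
    have -> : mu (widen_ord hrm i) = mu' i by rewrite -mu'E.
    by rewrite divff // -sC expf_neq0 // sC0.
  rewrite dO ?mul0r; last by apply/eqP => /(congr1 val) /= h; apply: hij; apply: val_inj.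
  by [].
have hrn : (r <= n)%N by rewrite -(mxrank_unitary hX) rank_leq_col.
have [U0 [hU0 U0E]] := complete_unitary hX.
exists s; split; [|split; [|split]].
- move=> j _; rewrite /s ler_sqrt //; exact: mu'anti.
- by move=> j _; apply: sqrtr_ge0.
- move=> j; rewrite geq_min => hj; rewrite /s muzero ?sqrtr0 //.
  by case/orP: hj => hj; apply: leq_trans hj.
exists U0^T, (adjmx P); split; [|split].
- by apply/unitary_spec; rewrite trmx_unitary.
- exact: unitary_adj hP.
rewrite adjmxK.
have -> : A = B *m P by rewrite Bdef -mulmxA hPP mulmx1.
congr (_ *m P).
apply/matrixP => k j; rewrite mxE.
case: (ltnP j r) => hjr.
  have hjn : (j < n)%N := leq_trans hjr hrn.
  rewrite (bigD1 (Ordinal hjn)) //= big1 ?addr0; last first.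
    move=> a ha; rewrite !mxE.
    have -> : (a == j :> nat) = false.
      by apply/negbTE; apply: contra ha => /eqP h; apply/eqP; apply: val_inj.
    by rewrite mulr0.
  rewrite !mxE eqxx U0E mxE.
  have -> : widen_ord hrm (Ordinal hjr) = j by apply: val_inj.
  by rewrite divfK // sC0.
have hB0 : forall k, B k j = 0.
  have := dE j; rewrite dmu -mu'E muzero // rmorph0 => /esym h k0.
  apply/eqP; rewrite -normr_eq0 -sqrf_eq0.
  by apply/eqP; apply: (psumr_eq0P _ h) => // i _; apply: exprn_ge0; apply: normr_ge0.
rewrite hB0 big1 // => a _; rewrite !mxE.
case: eqP => [ha|_]; last by rewrite mulr0.
by rewrite /s ha muzero // sqrtr0 mulr0.
Qed.

End W5.

Section W6.
Variable R : realType.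
Local Notation C := (R[i]).

Lemma pzR (k : nat) : ((Posz k)%:~R : R) = k%:R. Proof. by []. Qed.

Lemma ceil_nat (k : nat) : Num.ceil (k%:R : R) = k%:Z.
Proof. by apply: ceil_def; rewrite intrB /= !pzR lexx andbT ltrBlDr ltrDl ltr01. Qed.

Lemma truncn_nat (k : nat) : Num.truncn (k%:R : R) = k.
Proof. exact: natrK. Qed.

Lemma ceil_natD (k : nat) (t : R) : 0 < t < 1 -> Num.ceil (k%:R + t) = (k.+1)%:Z.
Proof.
move=> /andP[t0 t1]; apply: ceil_def; rewrite intrB /= !pzR -natr1.
apply/andP; split; lra.
Qed.

Lemma truncn_natD (k : nat) (t : R) : 0 < t < 1 -> Num.truncn (k%:R + t) = k.
Proof.
move=> /andP[t0 t1]; apply: truncn_def; rewrite -natr1.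
apply/andP; split; lra.
Qed.

Lemma sv_ge0 n m (A : 'M[C]_(n, m)) s : singular_values A s -> forall j, 0 <= s j.
Proof.
move=> [_ [h0 [hz _]]] j; case: (ltnP j (minn n m)) => hj; first exact: h0.
by rewrite hz.
Qed.

Lemma sv_anti n m (A : 'M[C]_(n, m)) s : singular_values A s -> forall i j, (i <= j)%N -> s j <= s i.
Proof.
move=> hs i j /subnK <-; elim: (j - i)%N => [|k IH] //=.
apply: le_trans IH; rewrite addSn.
have [hd [h0 [hz _]]] := hs.
case: (ltnP (k + i).+1 (minn n m)) => hk; first exact: hd.
by rewrite hz // (sv_ge0 hs).
Qed.

Lemma adm_mono n m a b (A : 'M[C]_(n, m)) : 0 <= a -> a <= b ->
  admissible a A -> admissible b A.
Proof.
move=> a0 ab [hu [s [hs [hz hth]]]]; split => //; exists s; split => //; split.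
  move=> j hj; apply: hz; apply: le_trans hj; exact: le_ceil.
move=> /= hb.
set kb := Num.truncn b; set ka := Num.truncn a.
have S0 : 0 <= \sum_(j < kb) s j by apply: sumr_ge0 => j _; apply: (sv_ge0 hs).
have RHS0 : 0 <= (b - kb%:R) / kb%:R * \sum_(j < kb) s j.
  by apply: mulr_ge0 => //; apply: divr_ge0 => //; apply: ltW.
have hkab : (ka <= kb)%N by apply: le_truncn.
case: (ltnP ka kb) => hk.
  rewrite hz //; apply: (@le_trans _ _ (ka.+1)%:Z).
    by rewrite ceil_le_int pzR; have := truncn_itv a0; rewrite -/ka => /andP[_ /ltW].
  by rewrite lez_nat.
have ekab : ka = kb by apply/eqP; rewrite eqn_leq hkab hk.
case: (ltrP 0 (a - ka%:R)) => ha.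
  have h1 := hth ha; rewrite -/ka in h1; rewrite -ekab; apply: le_trans h1 _.
  apply: ler_wpM2r; first by rewrite ekab.
  apply: ler_wpM2r; first by rewrite invr_ge0.
  by rewrite lerD2r.
have eka : a = ka%:R.
  apply/eqP; rewrite eq_le -subr_le0 ha /=.
  by have := truncn_itv a0; rewrite -/ka => /andP[].
rewrite hz //; last by rewrite -ekab eka ceil_nat.
Qed.

Lemma cone_mono n m a b (rho : 'M[C]_(n * m)) : 0 <= a -> a <= b ->
  cone_V n m a rho -> cone_V n m b rho.
Proof.
move=> a0 ab [N [c [A [hA ->]]]]; exists N, c, A; split => // l.
by have [h1 h2] := hA l; split => //; apply: adm_mono h2.
Qed.

Lemma Kset_mono n m a b (rho : 'M[C]_(n * m)) : 0 <= a -> a <= b ->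
  Kset n m a rho -> Kset n m b rho.
Proof.
move=> a0 ab hK e e0; have [sigma [hs hd]] := hK e e0; exists sigma; split => //.
exact: cone_mono hs.
Qed.

Lemma Pset_anti n m a b (Phi : 'M[C]_n -> 'M[C]_m) : 0 <= a -> a <= b ->
  Pset b Phi -> Pset a Phi.
Proof. by move=> a0 ab hP A hA; apply: hP; apply: adm_mono hA. Qed.

End W6.

Section W7.
Variable R : realType.
Local Notation C := (R[i]).

Lemma admissible_d n m (A : 'M[C]_(n, m)) : unit_vec A -> admissible (minn n m)%:R A.
Proof.
move=> hu; split => //; have [s hs] := svd_exists A; exists s; split => //; split.
  move=> j; rewrite ceil_nat lez_nat => hj; have [_ [_ [hz _]]] := hs; exact: hz.
by rewrite /= truncn_nat subrr ltxx.
Qed.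

Lemma rowform p (A X : 'M[C]_p) i j :
  (row i A *m X *m adjmx (row j A)) 0 0 = (A *m X *m adjmx A) i j.
Proof. by rewrite -row_mul !mxE; apply: eq_bigr => b _; rewrite /adjmx !mxE. Qed.

Lemma psd_Kd n m (rho : 'M[C]_(n * m)) : psd rho -> Kset n m (minn n m)%:R rho.
Proof.
move=> [hH hpos].
have [P [d [hP E]]] := herm_spectral hH.
pose v := fun l : 'I_(n * m) => adjmx (row l P).
have hPP : adjmx P *m P = 1%:M := unitaryC hP.
have dE : forall l, (adjmx (v l) *m rho *m v l) 0 0 = d 0 l.
  move=> l; rewrite /v adjmxK rowform E !mulmxA hP mul1mx -mulmxA hP mulmx1.
  by rewrite mxE eqxx mulr1n.
have dpos : forall l, 0 <= d 0 l by move=> l; rewrite -dE; apply: hpos.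
have vn : forall l, (adjmx (v l) *m v l) 0 0 = 1.
  move=> l; rewrite -[adjmx (v l)]mulmx1 /v adjmxK rowform mulmx1 hP.
  by rewrite mxE eqxx.
move=> e e0; exists rho; split; last first.
  by move=> p q; rewrite subrr normr0 -[0]/((0 : R)%:C%C) ltcR.
exists (n * m)%N, (fun l => complex.Re (d 0 l)), (fun l => rshp (v l)); split.
  move=> l; split; first by have := dpos l; rewrite (ge0_complex (dpos l)) ler0c.
  by apply: admissible_d; apply/unit_vecE; rewrite psi_vec_reshape.
apply/matrixP => a b; rewrite E summxE mxE; apply: eq_bigr => l _.
rewrite adj_diagE mxE -(ge0_complex (dpos l)) /proj psi_vec_reshape mxE big_ord1.
by rewrite /v /adjmx !mxE conjCK; ring.
Qed.

End W7.

Section W8.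
Variable R : realType.
Local Notation C := (R[i]).

Lemma entry_le_fro n m (X : 'M[C]_(n, m)) i j : `|X i j| ^+ 2 <= fro X.
Proof.
have h0 : forall a b, 0 <= `|X a b| ^+ 2 by move=> a b; apply: exprn_ge0; apply: normr_ge0.
rewrite /fro (bigD1 i) //= (bigD1 j) //= -addrA lerDl addr_ge0 //.
  by apply: sumr_ge0 => b _.
by apply: sumr_ge0 => a _; apply: sumr_ge0 => b _.
Qed.

Lemma sqr_le_norm (z : C) (x : R) : 0 <= x -> `|z| ^+ 2 <= (x ^+ 2)%:C%C -> `|z| <= x%:C%C.
Proof.
move=> x0; rewrite rmorphXn /= (ler_pXn2r (n := 2)) //.
  by rewrite nnegrE normr_ge0.
by rewrite nnegrE ler0c.
Qed.

Lemma rdiagB n m (f g : nat -> R) :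
  rdiag n m (fun j => f j - g j) = rdiag n m f - rdiag n m g.
Proof. by apply/matrixP => i j; rewrite !mxE; case: ifP; rewrite ?rmorphB ?subr0. Qed.

Lemma rdiagZ n m (a : R) (f : nat -> R) :
  rdiag n m (fun j => a * f j) = a%:C%C *: rdiag n m f.
Proof. by apply/matrixP => i j; rewrite !mxE; case: ifP; rewrite ?rmorphM ?mulr0. Qed.

Lemma svdB n m (U : 'M[C]_n) (V : 'M[C]_m) (f g : nat -> R) :
  U *m rdiag n m f *m adjmx V - U *m rdiag n m g *m adjmx V =
  U *m rdiag n m (fun j => f j - g j) *m adjmx V.
Proof. by rewrite rdiagB mulmxBr mulmxBl. Qed.

Lemma svdZ n m (U : 'M[C]_n) (V : 'M[C]_m) (a : R) (f : nat -> R) :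
  U *m rdiag n m (fun j => a * f j) *m adjmx V = a%:C%C *: (U *m rdiag n m f *m adjmx V).
Proof. by rewrite rdiagZ -scalemxAr -scalemxAl. Qed.

Lemma projE n m (A : 'M[C]_(n, m)) p q :
  proj A p q = psi_vec A p 0 * (psi_vec A q 0)^*.
Proof. by rewrite /proj mxE big_ord1 adjmxE. Qed.

Lemma proj_scale n m (c : R) (A : 'M[C]_(n, m)) :
  proj (c%:C%C *: A) = (c ^+ 2)%:C%C *: proj A.
Proof.
apply/matrixP => p q; rewrite projE [RHS]mxE projE psi_vecZ !mxE rmorphM /= conjCR.
by rewrite rmorphXn /=; ring.
Qed.

Lemma psi_entry_le1 n m (A : 'M[C]_(n, m)) p : unit_vec A -> `|psi_vec A p 0| <= 1.
Proof.
move=> hu; rewrite psi_vecE' -[1 : C]/((1 : R)%:C%C); apply: sqr_le_norm => //.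
by rewrite expr1n; have := entry_le_fro A (mxtens_unindex p).1 (mxtens_unindex p).2; rewrite /fro hu.
Qed.

Lemma proj_diff_bound n m (A B : 'M[C]_(n, m)) (th : R) :
  unit_vec A -> th <= 1 -> (forall i j, `|(A - B) i j| <= th%:C%C) ->
  forall p q, `|proj A p q - proj B p q| <= (3 * th)%:C%C.
Proof.
move=> hu th1 hd p q; rewrite !projE.
set x := psi_vec A p 0; set y := psi_vec A q 0.
set x' := psi_vec B p 0; set y' := psi_vec B q 0.
have hx : `|x - x'| <= th%:C%C.
  have -> : x - x' = psi_vec (A - B) p 0 by rewrite psi_vecB !mxE.
  by rewrite psi_vecE'.
have hy : `|y - y'| <= th%:C%C.
  have -> : y - y' = psi_vec (A - B) q 0 by rewrite psi_vecB !mxE.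
  by rewrite psi_vecE'.
have hy1 : `|y| <= 1 by apply: psi_entry_le1.
have hx1 : `|x| <= 1 by apply: psi_entry_le1.
have th0 : 0 <= th by have := le_trans (normr_ge0 _) hx; rewrite ler0c.
have hx'1 : `|x'| <= (1 + th)%:C%C.
  rewrite rmorphD /=; apply: le_trans (_ : `|x| + `|x' - x| <= _).
    by rewrite -{1}[x'](subrK x) addrC ler_normD.
  by apply: lerD => //; rewrite distrC.
have -> : x * y^* - x' * y'^* = (x - x') * y^* + x' * (y - y')^*.
  by rewrite rmorphB /=; ring.
apply: le_trans (ler_normD _ _) _; rewrite !normrM !norm_conjC.
apply: le_trans (_ : th%:C%C * 1 + (1 + th)%:C%C * th%:C%C <= _).
  apply: lerD; apply: ler_pM => //; try apply: normr_ge0.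
rewrite mulr1 -rmorphM -rmorphD /= lecR; nra.
Qed.

End W8.

Section W9.
Variable R : realType.
Local Notation C := (R[i]).

Lemma sum_single n (P : pred 'I_n) (f : nat -> R) k :
  (forall i, 0 <= f i) -> (forall i, i != k -> f i = 0) ->
  \sum_(i < n | P i) f i <= f k.
Proof.
move=> f0 fk; apply: le_trans (_ : \sum_(i < n) f i <= _).
  rewrite [X in _ <= X](bigID P) /= lerDl; exact: sumr_ge0.
case: (ltnP k n) => hkn.
  rewrite (bigD1 (Ordinal hkn)) //= big1 ?addr0 // => i hi; apply: fk.
  by apply: contra hi => /eqP h; apply/eqP; apply: val_inj.
rewrite big1 // => i _; apply: fk; rewrite neq_ltn (leq_trans (ltn_ord i) hkn) //.
Qed.

Lemma unit_fro n m (A : 'M[C]_(n, m)) : unit_vec A <-> fro A = 1.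
Proof. by []. Qed.

Lemma fro_real n m (U : 'M[C]_n) (V : 'M[C]_m) (s : nat -> R) :
  Defs.unitarymx U -> Defs.unitarymx V ->
  unit_vec (U *m rdiag n m s *m adjmx V) <-> \sum_(i < n | (i < m)%N) (s i) ^+ 2 = 1.
Proof.
move=> hU hV; rewrite unit_fro fro_svd //; split => [h|->//].
by apply: complexI; rewrite h.
Qed.

Lemma trunc_approx n m (A : 'M[C]_(n, m)) (k : nat) (th : R) :
  (1 <= k)%N -> 0 < th < 1 -> admissible (k%:R + th) A ->
  exists (w : R) (B' : 'M[C]_(n, m)), [/\ 0 <= w, admissible k%:R B' &
    forall p q, `|proj A p q - w%:C%C * proj B' p q| <= (3 * th)%:C%C].
Proof.
move=> hk hth [hu [s [hs [hz hth']]]].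
rewrite ceil_natD // in hz.
have := hth'; rewrite /= truncn_natD // addrAC subrr add0r => /(_ (proj1 (andP hth))) hsk.
have [hdec [h0 [hmin [U [V [hU [hV hA]]]]]]] := hs.
have sge0 := sv_ge0 hs.
have th0 : 0 < th by case/andP: hth.
have th1 : th < 1 by case/andP: hth.
have fro1 : \sum_(i < n | (i < m)%N) (s i) ^+ 2 = 1 by apply/(fro_real _ hU hV); rewrite -hA.
have s_le1 : forall j, s j <= 1.
  move=> j; case: (ltnP j (minn n m)) => hj; last by rewrite hmin.
  have hjn : (j < n)%N by apply: leq_trans hj (geq_minl _ _).
  have hjm : (j < m)%N by apply: leq_trans hj (geq_minr _ _).
  have : s j ^+ 2 <= 1.
    rewrite -fro1 (bigD1 (Ordinal hjn)) //= lerDl; apply: sumr_ge0 => i _; exact: sqr_ge0.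
  by rewrite -{1}(expr1n _ 2) ler_pXn2r ?nnegrE.
have hk0 : (0 : R) < k%:R by rewrite ltr0n.
have sk_th : s k <= th.
  apply: le_trans hsk _.
  have : \sum_(j < k) s j <= k%:R.
    by apply: le_trans (_ : \sum_(j < k) (1 : R) <= _); [apply: ler_sum => j _ | rewrite sumr_const card_ord].
  move=> hS; apply: le_trans (_ : th / k%:R * k%:R <= _).
    by apply: ler_wpM2l => //; apply: divr_ge0; apply: ltW.
  by rewrite divfK // gt_eqF.
pose t := fun j => if (j < k)%N then s j else 0.
pose dl := fun j => s j - t j.
have tge0 : forall j, 0 <= t j by move=> j; rewrite /t; case: ifP.
have dlk : forall j, j != k -> dl j = 0.
  move=> j hj; rewrite /dl /t; case: ifP => hjk; first by rewrite subrr.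
  rewrite hz ?subr0 // lez_nat; rewrite ltn_neqAle eq_sym hj /=.
  by rewrite leqNgt hjk.
have dlkE : dl k = s k by rewrite /dl /t ltnn subr0.
have dl0 : forall j, 0 <= dl j ^+ 2 by move=> j; apply: sqr_ge0.
have sq_split : forall j, s j ^+ 2 = t j ^+ 2 + dl j ^+ 2.
  move=> j; rewrite /dl /t; case: ifP => _; first by rewrite subrr expr0n addr0.
  by rewrite expr0n add0r subr0.
have Sdl : \sum_(i < n | (i < m)%N) dl i ^+ 2 <= th ^+ 2.
  apply: le_trans (@sum_single n (fun i : 'I_n => (i < m)%N) (fun j => dl j ^+ 2) k dl0 _) _.
    by move=> i hi; rewrite dlk // expr0n.
  rewrite dlkE ler_pXn2r ?nnegrE //; exact: ltW.
pose w := \sum_(i < n | (i < m)%N) t i ^+ 2.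
have hw : w = 1 - \sum_(i < n | (i < m)%N) dl i ^+ 2.
  by rewrite -fro1 (eq_bigr (fun i : 'I_n => t i ^+ 2 + dl i ^+ 2) (fun i _ => sq_split i)) big_split /= addrK.
have w0 : 0 < w by rewrite hw subr_gt0; apply: le_lt_trans Sdl _; rewrite expr_lt1 // ltW.
pose N := Num.sqrt w.
have N0 : 0 < N by rewrite sqrtr_gt0.
pose t' := fun j => t j / N.
pose B' := U *m rdiag n m t' *m adjmx V.
have hB : U *m rdiag n m t *m adjmx V = N%:C%C *: B'.
  rewrite /B' -svdZ; congr (U *m rdiag n m _ *m _); apply: boolp.funext => j.
  by rewrite /t' mulrC divfK // gt_eqF.
exists w, B'; split; first exact: ltW.
- split.
    apply/(fro_real _ hU hV).
    rewrite /t' (eq_bigr (fun i : 'I_n => t i ^+ 2 / w)); last first.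
      by move=> i _; rewrite expr_div_n sqr_sqrtr // ltW.
    by rewrite -mulr_suml divff // gt_eqF.
  exists t'; split.
    split; [|split; [|split]].
    + move=> j hj; rewrite /t'; apply: ler_wpM2r; first by rewrite invr_ge0 ltW.
      rewrite /t; case: ifP => hj1; last by case: ifP.
      by rewrite (ltnW hj1); apply: hdec.
    + by move=> j _; rewrite /t'; apply: divr_ge0 => //; apply: ltW.
    + move=> j hj; rewrite /t' /t; case: ifP => _; last by rewrite mul0r.
      by rewrite hmin // mul0r.
    + by exists U, V.
  split.
    move=> j; rewrite ceil_nat lez_nat => hj; rewrite /t' /t.
    by rewrite ltnNge hj mul0r.
  by rewrite /= truncn_nat subrr ltxx.
- move=> p q.
  have -> : w%:C%C * proj B' p q = proj (U *m rdiag n m t *m adjmx V) p q.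
    by rewrite hB proj_scale sqr_sqrtr ?(ltW w0) // [RHS]mxE.
  apply: proj_diff_bound => //; first exact: ltW.
  move=> i j; rewrite hA svdB -/dl; apply: sqr_le_norm; first exact: ltW.
  apply: le_trans (entry_le_fro _ i j) _.
  by rewrite fro_svd // lecR.
Qed.

End W9.

Section W10.
Variable R : realType.
Local Notation C := (R[i]).

Lemma proj_trace n m (A : 'M[C]_(n, m)) : unit_vec A -> \sum_p proj A p p = 1.
Proof.
move=> hu; have h : fro A = 1 := hu; rewrite -h -psi_norm mxE; apply: eq_bigr => p _.
by rewrite projE adjmxE mulrC.
Qed.

Lemma Kset_right n m (k : nat) (rho : 'M[C]_(n * m)) : (1 <= k)%N ->
  (forall t : R, 0 < t < 1 -> Kset n m (k%:R + t) rho) -> Kset n m k%:R rho.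
Proof.
move=> hk hK e e0.
pose M := \sum_p `|rho p p|.
have M0 : 0 <= M by apply: sumr_ge0 => p _; apply: normr_ge0.
pose Mr := complex.Re M.
have MrE : M = Mr%:C%C := ge0_complex M0.
have Mr0 : 0 <= Mr by rewrite -ler0c -MrE.
pose K := Mr + (n * m)%:R + 1.
have K0 : 0 < K by rewrite /K; apply: ltr_wpDl; [apply: addr_ge0 => //| exact: ltr01].
pose th := Num.min (2^-1) (e / (6 * K)).
have th0 : 0 < th by rewrite lt_min invr_gt0 ltr0n /= divr_gt0 // mulr_gt0 // ltr0n.
have th1 : th < 1 by rewrite gt_min; apply/orP; left; rewrite invf_lt1 // ltr1n.
have thK : th * K <= e / 6.
  have h : th <= e / (6 * K) by rewrite ge_min lexx orbT.
  apply: le_trans (ler_wpM2r (ltW K0) h) _.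
  have -> : e / (6 * K) * K = e / 6 by field; rewrite gt_eqF.
  by [].
pose e' := Num.min (e / 2) 1.
have e'0 : 0 < e' by rewrite lt_min divr_gt0 // ltr01.
have e'1 : e' <= 1 by rewrite ge_min lexx orbT.
have e'2 : e' <= e / 2 by rewrite ge_min lexx.
have [sig' [[N [c [A [hA hsig]]]] hd]] := hK th (introT andP (conj th0 th1)) e' e'0.
have hAl : forall l, exists wB : R * 'M[C]_(n, m), [/\ 0 <= wB.1, admissible k%:R wB.2 &
    forall p q, `|proj (A l) p q - (wB.1)%:C%C * proj wB.2 p q| <= (3 * th)%:C%C].
  move=> l; have [c0 hadm] := hA l.
  have [w [B' [h1 h2 h3]]] := trunc_approx hk (introT andP (conj th0 th1)) hadm.
  by exists (w, B').
have [f hf] := fin_all_exists hAl.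
have c0 : forall l, 0 <= c l by move=> l; have [] := hA l.
have hsum : (\sum_l c l)%:C%C = \sum_p0 sig' p0 p0.
  rewrite hsig rmorph_sum /= (eq_bigr (fun p0 => \sum_l (c l)%:C%C * proj (A l) p0 p0)); last first.
    by move=> p0 _; rewrite summxE; apply: eq_bigr => l _; rewrite mxE.
  rewrite exchange_big /=; apply: eq_bigr => l _; rewrite -mulr_sumr proj_trace ?mulr1 //.
  by have [_ [hu _]] := hA l.
have csum : \sum_l c l <= Mr + (n * m)%:R.
  rewrite -lecR rmorphD /= -MrE rmorph_nat.
  rewrite -(ger0_norm (_ : 0 <= (\sum_l c l)%:C%C)); last by rewrite ler0c; apply: sumr_ge0.
  rewrite hsum; apply: le_trans (ler_norm_sum _ _ _) _.
  have -> : ((n * m)%:R : C) = \sum_(p0 < n * m) (1 : C) by rewrite sumr_const card_ord.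
  rewrite /M -big_split /=.
  apply: ler_sum => p0 _.
  apply: le_trans (_ : `|rho p0 p0| + `|rho p0 p0 - sig' p0 p0| <= _).
    have h := ler_normB (rho p0 p0) (rho p0 p0 - sig' p0 p0).
    have e1 : rho p0 p0 - (rho p0 p0 - sig' p0 p0) = sig' p0 p0 by ring.
    by rewrite e1 in h.
  apply: lerD => //; apply: le_trans (ltW (hd p0 p0)) _.
  by rewrite -[1 : C]/((1 : R)%:C%C) lecR.
exists (\sum_l ((c l * (f l).1)%:C%C *: proj (f l).2)); split.
  exists N, (fun l => c l * (f l).1), (fun l => (f l).2); split => // l.
  have [w0 hadm _] := hf l; split => //; exact: mulr_ge0.
move=> p q.
have -> : rho p q - (\sum_l ((c l * (f l).1)%:C%C *: proj (f l).2)) p q =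
  (rho p q - sig' p q) + \sum_l (c l)%:C%C * (proj (A l) p q - ((f l).1)%:C%C * proj (f l).2 p q).
  rewrite hsig !summxE -addrA; congr (_ + _).
  rewrite -!sumrN -big_split /=; apply: eq_bigr => l _; rewrite !mxE rmorphM /=; ring.
apply: le_lt_trans (ler_normD _ _) _.
apply: (@lt_le_trans _ _ (e'%:C%C + \sum_l (c l)%:C%C * (3 * th)%:C%C)).
  apply: ltr_leD => //; apply: le_trans (ler_norm_sum _ _ _) _.
  apply: ler_sum => l _; rewrite normrM ger0_norm ?ler0c //.
  by apply: ler_wpM2l; [rewrite ler0c | have [] := hf l].
rewrite -mulr_suml -rmorph_sum -rmorphM -rmorphD /= lecR.
apply: le_trans (_ : e / 2 + e / 2 <= _); last by rewrite -splitr.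
apply: lerD => //.
apply: le_trans (_ : (Mr + (n * m)%:R) * (3 * th) <= _).
  by apply: ler_wpM2r => //; apply: mulr_ge0 => //; apply: ltW.
apply: le_trans (_ : K * (3 * th) <= _).
  by apply: ler_wpM2r; [apply: mulr_ge0 => //; apply: ltW | rewrite /K lerDl].
have : th * K <= e / 6 := thK.
move=> h; have -> : K * (3 * th) = 3 * (th * K) by ring.
apply: le_trans (ler_wpM2l _ h) _ => //.
by rewrite le_eqVlt; apply/orP; left; apply/eqP; field.
Qed.

End W10.

Section W11.
Variable R : realType.
Local Notation C := (R[i]).

Lemma realB (x p q e0 : R) : 0 < e0 ->
  (forall eps, 0 < eps < e0 -> 0 <= x - eps * p + eps ^+ 2 * q) -> 0 <= x.
Proof.
move=> e00 H; rewrite leNgt; apply/negP => x0.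
pose K := `|p| + `|q| + 1.
have K0 : 0 < K by rewrite /K ltr_wpDl // addr_ge0.
pose eps := Num.min (e0 / 2) (Num.min (2^-1) (- x / (2 * K))).
have ep0 : 0 < eps.
  by rewrite !lt_min divr_gt0 //= invr_gt0 ltr0n /= divr_gt0 ?oppr_gt0 // mulr_gt0.
have ep1 : eps < e0.
  by rewrite gt_min; apply/orP; left; rewrite ltr_pdivrMr // ltr_pMr // ltr1n.
have ep2 : eps <= 1.
  rewrite ge_min; apply/orP; right; rewrite ge_min; apply/orP; left.
  by rewrite invf_le1 // ler1n.
have ep3 : eps * K <= - x / 2.
  have h : eps <= - x / (2 * K) by rewrite !ge_min lexx !orbT.
  apply: le_trans (ler_wpM2r (ltW K0) h) _.
  by rewrite le_eqVlt; apply/orP; left; apply/eqP; field; rewrite gt_eqF.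
have := H eps (introT andP (conj ep0 ep1)).
have hp1 : p <= `|p| := ler_norm p.
have hp2 : - p <= `|p| by rewrite -normrN; apply: ler_norm.
have hq1 : q <= `|q| := ler_norm q.
have nq0 : 0 <= `|q| := normr_ge0 q.
have f1 : 0 <= eps * (`|p| + p) by apply: mulr_ge0; [apply: ltW | lra].
have f2 : 0 <= eps ^+ 2 * (`|q| - q) by apply: mulr_ge0; [apply: sqr_ge0 | lra].
have f3 : 0 <= eps * (1 - eps) * `|q| by apply: mulr_ge0 => //; apply: mulr_ge0; [apply: ltW | lra].
move: ep3; rewrite /K => ep3.
nra.
Qed.


Lemma complex_lim (z a b : C) (e0 : R) : 0 < e0 ->
  (forall eps : R, 0 < eps < e0 -> 0 <= z - eps%:C%C * a + (eps ^+ 2)%:C%C * b) -> 0 <= z.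
Proof.
move=> e00 H.
have HE : forall eps : R, 0 < eps < e0 ->
   complex.Im z - eps * complex.Im a + eps ^+ 2 * complex.Im b = 0 /\ 0 <= complex.Re z - eps * complex.Re a + eps ^+ 2 * complex.Re b.
  move=> eps he; have := H eps he.
  case: z {H} => zr zi; case: a => ar ai; case: b => br bi.
  rewrite lecE /= => /andP[/eqP hi hr]; split.
    by rewrite -hi; ring.
  by move: hr; rewrite !mul0r !subr0.
have hi1 : 0 <= complex.Im z.
  apply: (realB (p := complex.Im a) (q := complex.Im b) e00) => eps he.
  have [h _] := HE eps he; lra.
have hi2 : 0 <= - complex.Im z.
  apply: (realB (p := - complex.Im a) (q := - complex.Im b) e00) => eps he.
  have [h _] := HE eps he; lra.
have hr : 0 <= complex.Re z.
  apply: (realB (p := complex.Re a) (q := complex.Re b) e00) => eps he.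
  have [_ h] := HE eps he; lra.
case: z {H HE} hi1 hi2 hr => zr zi /= hi1 hi2 hr.
rewrite lecE /= hr andbT; apply/eqP; lra.
Qed.

Lemma entryB p (X Y : 'M[C]_p) i j : (X - Y) i j = X i j - Y i j.
Proof. by rewrite !mxE. Qed.
Lemma entryD p (X Y : 'M[C]_p) i j : (X + Y) i j = X i j + Y i j.
Proof. by rewrite !mxE. Qed.
Lemma entryZ p c (X : 'M[C]_p) i j : (c *: X) i j = c * X i j.
Proof. by rewrite !mxE. Qed.

Lemma Qexp p (Cm : 'M[C]_p) (x y : 'cV[C]_p) (e : R) :
  (adjmx (x - e%:C%C *: y) *m Cm *m (x - e%:C%C *: y)) 0 0 =
  (adjmx x *m Cm *m x) 0 0 - e%:C%C * ((adjmx x *m Cm *m y) 0 0 + (adjmx y *m Cm *m x) 0 0)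
  + (e ^+ 2)%:C%C * (adjmx y *m Cm *m y) 0 0.
Proof.
rewrite adjmxB adjmxZ conjCR !mulmxBl !mulmxBr -!scalemxAl -!scalemxAr.
rewrite !entryB !entryZ rmorphXn /=; ring.
Qed.

End W11.

Section W12.
Variable R : realType.
Local Notation C := (R[i]).

Lemma Qscale p (Cm : 'M[C]_p) (y : 'cV[C]_p) (c : R) :
  (adjmx (c%:C%C *: y) *m Cm *m (c%:C%C *: y)) 0 0 = (c ^+ 2)%:C%C * (adjmx y *m Cm *m y) 0 0.
Proof.
rewrite adjmxZ conjCR -scalemxAl -scalemxAr -scalemxAl scalerA entryZ rmorphXn /=; ring.
Qed.

Lemma Pset_left n m (k1 : nat) (Phi : 'M[C]_n -> 'M[C]_m) : (1 <= k1)%N ->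
  (forall t : R, 0 < t < 1 -> Pset (k1%:R + t) Phi) -> Pset (k1.+1)%:R Phi.
Proof.
move=> hk1 hP A [hu [s [hs [hz hth]]]].
rewrite ceil_nat in hz.
have sge0 := sv_ge0 hs.
have half : 0 < (2^-1 : R) < 1.
  by apply/andP; split; [rewrite invr_gt0 ltr0n | rewrite invf_lt1 ?ltr0n // ltr1n].
have hk0 : (0 : R) < k1%:R by rewrite ltr0n.
case: (eqVneq (s k1) 0) => hsk.
  apply: (hP 2^-1 half A); split => //; exists s; split => //; split.
    by move=> j; rewrite ceil_natD // => hj; apply: hz.
  rewrite /= truncn_natD // hsk => _; apply: mulr_ge0; last by apply: sumr_ge0.
  by apply: divr_ge0; [rewrite addrAC subrr add0r; case/andP: half => /ltW | apply: ltW].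
have sk0 : 0 < s k1 by rewrite lt_def hsk sge0.
have [hdec [h0 [hmin [U [V [hU [hV hA]]]]]]] := hs.
have hkmin : (k1 < minn n m)%N.
  by rewrite ltnNge; apply/negP => h; move: hsk; rewrite hmin ?eqxx.
have hkn : (k1 < n)%N by apply: leq_trans hkmin (geq_minl _ _).
have hkm : (k1 < m)%N by apply: leq_trans hkmin (geq_minr _ _).
pose e1 := fun j : nat => if j == k1 then (1 : R) else 0.
pose D := U *m rdiag n m e1 *m adjmx V.
pose Cm := choi Phi.
pose x := psi_vec A; pose y := psi_vec D.
apply: (@complex_lim _ _ ((adjmx x *m Cm *m y) 0 0 + (adjmx y *m Cm *m x) 0 0)
          ((adjmx y *m Cm *m y) 0 0) (s k1) sk0) => eps /andP[ep0 ep1].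
rewrite -Qexp.
pose t := fun j => s j - eps * e1 j.
have hB : x - eps%:C%C *: y = psi_vec (U *m rdiag n m t *m adjmx V).
  by rewrite /x /y -psi_vecZ -psi_vecB hA -svdZ svdB.
rewrite hB.
have tk1 : t k1 = s k1 - eps by rewrite /t /e1 eqxx mulr1.
have tj : forall j, j != k1 -> t j = s j by move=> j hj; rewrite /t /e1 (negbTE hj) mulr0 subr0.
have tge0 : forall j, 0 <= t j.
  move=> j; case: (eqVneq j k1) => [->|hj]; last by rewrite tj.
  by rewrite tk1 subr_ge0 ltW.
pose w := \sum_(i < n | (i < m)%N) t i ^+ 2.
have w0 : 0 < w.
  apply: lt_le_trans (_ : t k1 ^+ 2 <= w).
    by rewrite tk1 exprn_gt0 // subr_gt0.
  rewrite /w (bigD1 (Ordinal hkn)) //= lerDl; apply: sumr_ge0 => i _; exact: sqr_ge0.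
pose N := Num.sqrt w.
have N0 : 0 < N by rewrite sqrtr_gt0.
pose t' := fun j => t j / N.
pose B' := U *m rdiag n m t' *m adjmx V.
have hB' : U *m rdiag n m t *m adjmx V = N%:C%C *: B'.
  rewrite /B' -svdZ; congr (U *m rdiag n m _ *m _); apply: boolp.funext => j.
  by rewrite /t' mulrC divfK // gt_eqF.
rewrite hB' psi_vecZ Qscale; apply: mulr_ge0; first by rewrite ler0c sqr_ge0.
pose th := (s k1 - eps) / s k1.
have th0 : 0 < th < 1.
  apply/andP; split; first by rewrite divr_gt0 // subr_gt0.
  by rewrite ltr_pdivrMr // mul1r ltrBlDr ltrDl.
apply: (hP th th0 B'); split.
  apply/(fro_real _ hU hV).
  rewrite /t' (eq_bigr (fun i : 'I_n => t i ^+ 2 / w)); last first.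
    by move=> i _; rewrite expr_div_n sqr_sqrtr // ltW.
  by rewrite -mulr_suml divff // gt_eqF.
exists t'; split.
  split; [|split; [|split]].
  + move=> j hj; rewrite /t'; apply: ler_wpM2r; first by rewrite invr_ge0 ltW.
    case: (eqVneq j k1) => [ej|hj1].
      rewrite ej tj; last by rewrite neq_ltn ltnSn orbT.
      by rewrite hz ?tge0 // lez_nat.
    rewrite (tj j hj1); apply: le_trans (_ : s j.+1 <= _); last exact: hdec.
    by rewrite /t /e1; case: ifP; rewrite ?mulr1 ?mulr0 ?subr0 // gerBl ltW.
  + by move=> j _; rewrite /t'; apply: divr_ge0 => //; apply: ltW.
  + move=> j hj; rewrite /t' tj ?hmin ?mul0r //.
    by apply/eqP => ej; move: hj; rewrite ej leqNgt hkmin.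
  + by exists U, V.
split.
  move=> j; rewrite ceil_natD // lez_nat => hj; rewrite /t' tj ?hz ?mul0r ?lez_nat //.
  by apply/eqP => ej; move: hj; rewrite ej ltnn.
rewrite /= truncn_natD // addrAC subrr add0r => _.
rewrite /t' -mulr_suml mulrA; apply: ler_wpM2r; first by rewrite invr_ge0 ltW.
rewrite tk1.
have hS : k1%:R * s k1 <= \sum_(j < k1) t j.
  rewrite (eq_bigr (fun j : 'I_k1 => s j)); last first.
    by move=> j _; rewrite tj // neq_ltn ltn_ord.
  apply: le_trans (_ : \sum_(j < k1) s k1 <= _); first by rewrite sumr_const card_ord mulr_natl.
  by apply: ler_sum => j _; apply: (sv_anti hs); apply: ltnW.
apply: le_trans (_ : th / k1%:R * (k1%:R * s k1) <= _); last first.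
  by apply: ler_wpM2l => //; apply: divr_ge0; [case/andP: th0 => /ltW | apply: ltW].
rewrite /th le_eqVlt; apply/orP; left; apply/eqP; field.
by rewrite !gt_eqF.
Qed.

End W12.

Local Open Scope classical_set_scope.

Lemma KFSN (R : realType) (n m k : nat) (rho : 'M[R[i]]_(n * m)) :
  (1 <= k <= minn n m)%N -> psd rho ->
  (Kset n m k%:R rho <-> FSN n m rho <= k%:R).
Proof.
move=> /andP[hk1 hkd] hpsd.
set d := minn n m.
pose S := [set a : R | 1 <= a <= d%:R /\ Kset n m a rho].
have hd1 : (1 <= d)%N := leq_trans hk1 hkd.
have Sd : S d%:R by split; [rewrite lexx ler1n hd1 | exact: psd_Kd].
have S0 : S !=set0 by exists d%:R.
have Slb : lbound S 1 by move=> y [/andP[]].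
have hlb : has_lbound S by exists 1.
rewrite /FSN -/d -/S; split.
  move=> hK; apply: ge_inf => //; split => //.
  by rewrite ler1n hk1 ler_nat hkd.
move=> hinf.
case: (ltnP k d) => hkd'; last first.
  have -> : k = d by apply/eqP; rewrite eqn_leq hkd hkd'.
  by have [] := Sd.
apply: (@Kset_right R n m k rho hk1) => t /andP[t0 t1].
have hkt : k%:R < k%:R + t by rewrite ltrDl.
have [y [/andP[y1 yd] hy] hyk] := inf_lt S0 (le_lt_trans hinf hkt).
apply: (Kset_mono _ (ltW hyk) hy).
by apply: le_trans y1.
Qed.


Lemma PTAU (R : realType) (n m k : nat) (Phi : 'M[R[i]]_n -> 'M[R[i]]_m) :
  (1 <= k <= minn n m)%N -> Pset 1 Phi -> (Pset k%:R Phi <-> k%:R <= tau Phi).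
Proof.
move=> /andP[hk1 hkd] hP1.
set d := minn n m.
pose S := [set a : R | 1 <= a <= d%:R /\ Pset a Phi].
have hd1 : (1 <= d)%N := leq_trans hk1 hkd.
have S1 : S 1 by split => //; rewrite lexx ler1n hd1.
have S0 : S !=set0 by exists 1.
have hub : has_ubound S by exists d%:R => y [/andP[]].
have hsup : has_sup S by split.
rewrite /tau -/d -/S; split.
  move=> hP; apply: sup_upper_bound => //; split => //.
  by rewrite ler1n hk1 ler_nat hkd.
move=> hs.
case: k hk1 hkd hs => [//|k1] _ hkd hs.
case: (posnP k1) => [->|hk1]; first by [].
apply: (Pset_left hk1) => t /andP[t0 t1].
have hkt : k1%:R + t < k1.+1%:R by rewrite -natr1 ltrD2l.
have [y [/andP[y1 yd] hy] hyk] := sup_gt S0 (lt_le_trans hkt hs).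
apply: (Pset_anti _ (ltW hyk) hy).
by apply: addr_ge0 => //; apply: ltW.
Qed.

Theorem proposition4p4 (R : realType) (n m k : nat) :
  (1 <= k <= minn n m)%N ->
  (forall rho : 'M[R[i]]_(n * m), psd rho -> rho != 0 ->
     (Kset n m k%:R rho <-> FSN n m rho <= k%:R) /\
     (exists l : nat, Num.ceil (FSN n m rho) = l%:Z /\
        (1 <= l <= minn n m)%N /\ Kset n m l%:R rho /\
        forall l' : nat, (1 <= l' <= minn n m)%N -> Kset n m l'%:R rho -> (l <= l')%N)) /\
  (forall Phi : {linear 'M[R[i]]_n -> 'M[R[i]]_m},
     herm_preserving Phi -> Pset 1 Phi ->
     (Pset k%:R Phi <-> k%:R <= tau Phi)).
Proof.
move=> hk; split; last by move=> Phi _ hP1; apply: PTAU.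
move=> rho hpsd _; split; first exact: KFSN.
have /andP[hk1 hkd] := hk.
set d := minn n m.
have hd1 : (1 <= d)%N := leq_trans hk1 hkd.
pose S := [set a : R | 1 <= a <= d%:R /\ Kset n m a rho].
have Sd : S d%:R by split; [rewrite lexx ler1n hd1 | exact: psd_Kd].
have S0 : S !=set0 by exists d%:R.
have Slb : lbound S 1 by move=> y [/andP[]].
have hlb : has_lbound S by exists 1.
have F1 : 1 <= FSN n m rho by apply: lb_le_inf.
have Fd : FSN n m rho <= d%:R by apply: ge_inf.
have c0 : 0 <= Num.ceil (FSN n m rho).
  by rewrite ceil_ge0; apply: lt_le_trans F1; apply: lt_trans (ltr01 : (0:R) < 1); rewrite ltrN10.
exists `|Num.ceil (FSN n m rho)|%N.
have hcl : Num.ceil (FSN n m rho) = (`|Num.ceil (FSN n m rho)|%N)%:Z by rewrite gez0_abs.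
set l := `|Num.ceil (FSN n m rho)|%N in hcl *.
have hl1 : (1 <= l)%N.
  have : 0 < Num.ceil (FSN n m rho) by rewrite ceil_gt0; apply: lt_le_trans F1; exact: ltr01.
  by rewrite hcl ltz_nat.
have hld : (l <= d)%N.
  have : Num.ceil (FSN n m rho) <= d%:Z by rewrite ceil_le_int pzR.
  by rewrite hcl lez_nat.
have Fl : FSN n m rho <= l%:R by rewrite -pzR -hcl; apply: ceil_ge.
split => //; split; first by rewrite hl1 hld.
have hl : (1 <= l <= minn n m)%N by rewrite hl1 hld.
split; first by apply/(@KFSN R n m l rho hl hpsd).
move=> l' hl' hK.
have := (@KFSN R n m l' rho hl' hpsd).1 hK.
by rewrite -pzR -ceil_le_int hcl lez_nat.
Qed.
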